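(* For every DAG $\vec H$ with $k$ vertices, $\mathrm{dtw}(\vec H)\le \frac{k}{5}+4$.
   Context: For a DAG $\vec H$, a source is a vertex of in-degree $0$; $S$ denotes the set of sources; $R(s)$ is the set of vertices reachable from $s$, and $R(B)=\bigcup_{s\in B}R(s)$. A DAG tree decomposition of $\vec H$ is a tree $T$ whose nodes (bags) are subsets of $S$ such that every source lies in some bag and, for any bags $B,B_1,B_2$ with $B$ on the path between $B_1$ and $B_2$ in $T$, $R(B_1)\cap R(B_2)\subseteq R(B)$; its width is the maximum bag size and $\mathrm{dtw}(\vec H)$ is the minimum width. *)

(* Defs.v *)
From mathcomp Require Import all_boot all_order all_algebra.
Set Implicit Arguments. Unset Strict Implicit. Unset Printing Implicit Defensive.

Definition is_dag (V : finType) (e : rel V) : Prop :=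
  forall x y, e x y -> ~~ connect e y x.

Definition sources (V : finType) (e : rel V) : {set V} :=
  [set v | [forall u, ~~ e u v]].

Definition reach (V : finType) (e : rel V) (s : V) : {set V} :=
  [set v | connect e s v].

Definition reachB (V : finType) (e : rel V) (B : {set V}) : {set V} :=
  \bigcup_(s in B) reach e s.

Definition is_tree (I : finType) (t : rel I) : Prop :=
  symmetric t /\ irreflexive t /\
  forall x y : I, exists! p : seq I,
      [&& path t x p, last x p == y & uniq (x :: p)].

Definition on_tree_path (I : finType) (t : rel I) (x y z : I) : Prop :=
  forall p : seq I, path t x p -> last x p = y -> uniq (x :: p) -> z \in x :: p.

Definition dag_tree_decomposition (V : finType) (e : rel V)
    (I : finType) (t : rel I) (bag : I -> {set V}) : Prop :=
  [/\ is_tree t,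
      forall i, bag i \subset sources e,
      forall s, s \in sources e -> exists i, s \in bag i &
      forall i i1 i2, on_tree_path t i1 i2 i ->
        reachB e (bag i1) :&: reachB e (bag i2) \subset reachB e (bag i)].

Definition dtd_width (V : finType) (I : finType) (bag : I -> {set V}) : nat :=
  \max_(i : I) #|bag i|.

(* Main.v *)
Require Import Defs.
From mathcomp Require Import all_boot all_order all_algebra.
From mathcomp Require Import zify lra.
Import Order.TTheory GRing.Theory Num.Theory.
Set Implicit Arguments. Unset Strict Implicit. Unset Printing Implicit Defensive.

Section Abstract.
Variables (T V : finType) (A : V -> {set T}).

Definition rooted (par : nat -> nat) (X : pred nat) : Prop :=
  (forall i, ~~ X i) \/
  exists r, X r /\ forall x, X x -> x != r -> 0 < x /\ X (par x).

Definition Xof n (bag : nat -> {set T}) (U : {set T}) : pred nat :=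
  fun i => (i < n) && (bag i :&: U != set0).

Definition valid (W : {set T}) (F : {set V}) n (par : nat -> nat) (bag : nat -> {set T}) : Prop :=
  [/\ 0 < n, forall i, 0 < i < n -> par i < i,
      forall i, i < n -> bag i \subset W,
      forall w, w \in W -> exists2 i, i < n & w \in bag i &
      forall v, v \in F -> rooted par (Xof n bag (A v))].

Definition dec (W : {set T}) (F : {set V}) K := exists n par bag,
  valid W F n par bag /\ forall i, i < n -> #|bag i| <= K.

Lemma rooted_ext par par' (X X' : pred nat) :
  X =1 X' -> (forall x, X x -> par' x = par x) -> rooted par X -> rooted par' X'.
Proof.
move=> eX ep [H|[r [Xr H]]]; [left=> i; by rewrite -eX|right; exists r].
split; first by rewrite -eX.
move=> x; rewrite -eX => Xx xr; have [? ?] := H x Xx xr.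
by rewrite ep // -eX.
Qed.

Lemma dec_single (W : {set T}) (F : {set V}) : dec W F #|W|.
Proof.
exists 1, (fun _ => 0), (fun _ => W); split; last by [].
split => //.
- by case=> [|[]].
- by move=> w wW; exists 0.
- move=> v _; rewrite /rooted /Xof.
  case: (boolP (W :&: A v == set0)) => h; first by left=> i; rewrite andbF.
  right; exists 0; split; first by [].
  by case=> [|x] //; rewrite ltnS ltn0.
Qed.

Definition Fa (F : {set V}) (a : T) := [set v in F | a \notin A v].

Lemma dec_apex (W : {set T}) (F : {set V}) a K : a \in W -> dec (W :\ a) (Fa F a) K -> dec W F K.+1.
Proof.
move=> aW [n [par [bag [[n0 hp hb hc hr] hK]]]].
exists n, par, (fun i => a |: bag i); split; last first.
  by move=> i lin; rewrite (leq_trans (leq_card_setU _ _)) // cards1 add1n ltnS hK.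
split => //.
- move=> i lin; apply/subsetP=> x; rewrite in_setU1 => /orP[/eqP->//|xb].
  by have := subsetP (hb i lin) x xb; rewrite in_setD1 => /andP[].
- move=> w wW; case: (eqVneq w a) => [->|wa]; first by exists 0 => //; rewrite setU11.
  have [i lin wb] : exists2 i, i < n & w \in bag i by apply: hc; rewrite in_setD1 wa.
  by exists i => //; rewrite in_setU1 wb orbT.
- move=> v vF; case: (boolP (a \in A v)) => av.
    right; exists 0; split.
      by rewrite /Xof n0 /=; apply/set0Pn; exists a; rewrite in_setI setU11.
    move=> x /andP[xn _] x0; split; first by rewrite lt0n.
    rewrite /Xof; apply/andP; split.
      by apply: leq_trans (hp x _) (ltnW xn); rewrite lt0n x0.
    by apply/set0Pn; exists a; rewrite in_setI setU11.
  apply: (rooted_ext _ _ (hr v _)) => //; last by rewrite inE vF.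
  have e : forall B, (a |: B) :&: A v = B :&: A v.
    by move=> B; apply/setP=> x; rewrite !inE; case: (eqVneq x a) => [->|]; rewrite ?(negbTE av) ?andbF.
  by move=> i; rewrite /Xof e.
Qed.


Definition dset (W : {set T}) (F : {set V}) a :=
  [set v in F | (a \in A v) && (1 < #|A v :&: W|)].
Definition deg (W : {set T}) (F : {set V}) a := #|dset W F a|.

Lemma card2 (S : {set T}) a y : a \in S -> y \in S -> y != a -> 1 < #|S|.
Proof.
move=> aS yS ya; rewrite (cardsD1 a S) aS add1n ltnS; apply/card_gt0P.
by exists y; rewrite in_setD1 ya.
Qed.

Lemma disj_sub (B W U : {set T}) : B \subset W -> U :&: W == set0 -> B :&: U == set0.
Proof.
move=> BW /eqP h; apply/eqP/setP=> x; rewrite !inE.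
apply/negbTE/negP=> /andP[xB xU].
have : x \in U :&: W by rewrite inE xU (subsetP BW).
by rewrite h inE.
Qed.

Lemma dec_peel (W : {set T}) (F : {set V}) a K :
  a \in W -> deg W F a <= 1 -> dec (W :\ a) F K -> dec W F (maxn K 1).
Proof.
move=> aW d1 [n [par [bag [[n0 hp hb hc hr] hK]]]].
have [j jn hj] : exists2 j, j < n &
    forall v, v \in dset W F a -> Xof n bag (A v) j.
  case: (set_0Vmem (dset W F a)) => [->|[v vd]].
    by exists 0 => // v; rewrite inE.
  have e : forall u, u \in dset W F a -> u = v.
    by move=> u ud; move/card_le1_eqP: d1 => d1; apply: d1.
  move: (vd); rewrite inE => /andP[vF /andP[av c2]].
  have [b] : exists b, b \in (A v :&: W) :\ a.
    apply/card_gt0P; move: c2; rewrite (cardsD1 a) inE av aW /=.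
    by rewrite add1n ltnS.
  rewrite !inE => /andP[ba /andP[bv bW]].
  have [j jn bj] : exists2 j, j < n & b \in bag j by apply: hc; rewrite in_setD1 ba.
  exists j => // u ud; rewrite (e u ud) /Xof jn /=; apply/set0Pn.
  by exists b; rewrite inE bj.
exists n.+1, (fun i => if i == n then j else par i),
  (fun i => if i == n then [set a] else bag i); split; last first.
  move=> i lin; case: eqP => [_|/eqP ni]; first by rewrite cards1 leq_maxr.
  apply: leq_trans (hK i _) (leq_maxl _ _).
  by rewrite ltn_neqAle ni -ltnS.
split => //.
- move=> i /andP[i0 lin]; case: eqP => [->//|/eqP ni].
  by apply: hp; rewrite i0 /= ltn_neqAle ni -ltnS.
- move=> i lin; case: eqP => [_|/eqP ni]; first by rewrite sub1set.
  apply: subset_trans (hb i _) (subD1set _ _).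
  by rewrite ltn_neqAle ni -ltnS.
- move=> w wW; case: (eqVneq w a) => [->|wa].
    by exists n => //; rewrite eqxx set11.
  have [i lin wb] : exists2 i, i < n & w \in bag i by apply: hc; rewrite in_setD1 wa.
  by exists i; rewrite ?(ltn_eqF lin) // ltnS ltnW.
move=> v vF.
set X' := Xof n.+1 _ (A v).
have XE : forall i, i < n -> X' i = Xof n bag (A v) i.
  by move=> i lin; rewrite /X' /Xof (ltn_eqF lin) lin ltnS ltnW.
have XN : X' n = (a \in A v).
  rewrite /X' /Xof eqxx ltnSn /=.
  case: (boolP (a \in A v)) => av; first by apply/set0Pn; exists a; rewrite !inE eqxx.
  by apply/negbTE; rewrite negbK; apply/eqP/setP=> x; rewrite !inE; case: eqP => // ->; rewrite (negbTE av).
have XB : forall i, n < i -> X' i = false.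
  by move=> i ni; rewrite /X' /Xof ltnS leqNgt ni.
case: (boolP (a \in A v)) => av.
  case: (hr v vF) => [emp|[r [Xr H]]].
    right; exists n; split; first by rewrite XN.
    move=> x Xx xn; exfalso; case: (ltngtP x n) => [xl|xg|xe].
    - by move: Xx; rewrite XE // (negbTE (emp x)).
    - by rewrite XB in Xx.
    - by rewrite xe eqxx in xn.
  have rn : r < n by case/andP: Xr.
  right; exists r; split; first by rewrite XE.
  move=> x Xx xr; have xlt : x < n.+1 by case/andP: Xx.
  case: (boolP (x == n)) => [/eqP xe|xn].
  - subst x; split=> //.
    suff: Xof n bag (A v) j by rewrite /X' /Xof /= (ltn_eqF jn) ltnS => /andP[/ltnW -> ->].
    apply: hj; rewrite inE vF av /=.
    case/andP: Xr => _ /set0Pn [y]; rewrite inE => /andP[yb yv].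
    have := subsetP (hb r rn) y yb; rewrite in_setD1 => /andP[ya yW].
    by apply: (card2 (a:=a) (y:=y)); rewrite // inE ?av ?aW ?yv ?yW.
  - have xl : x < n by rewrite ltn_neqAle xn -ltnS.
    rewrite XE // in Xx; have [x0 Xp] := H x Xx xr.
    have pn : par x < n by case/andP: Xp.
    split=> //; move: Xp.
    by rewrite /X' /Xof /= (ltn_eqF pn) ltnS => /andP[/ltnW -> ->].
apply: rooted_ext (hr v vF).
  move=> i; case: (ltngtP i n) => [il|ig|ie].
  - by rewrite XE.
  - by rewrite XB // /Xof ltnNge ltnW.
  - by rewrite ie XN (negbTE av) /Xof ltnn.
by move=> x /andP[xn _]; rewrite (ltn_eqF xn).
Qed.


Lemma dec_join (W1 W2 : {set T}) (F : {set V}) K1 K2 :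
  (forall v, v \in F -> (A v :&: W2 == set0) || (A v :&: W1 == set0)) ->
  dec W1 F K1 -> dec W2 F K2 -> dec (W1 :|: W2) F (maxn K1 K2).
Proof.
move=> hF [n1 [p1 [b1 [[n10 hp1 hb1 hc1 hr1] hK1]]]]
  [n2 [p2 [b2 [[n20 hp2 hb2 hc2 hr2] hK2]]]].
exists (n1 + n2),
  (fun i => if i < n1 then p1 i else if i == n1 then 0 else n1 + p2 (i - n1)),
  (fun i => if i < n1 then b1 i else b2 (i - n1)); split; last first.
  move=> i lin; case: ifP => il.
    by apply: leq_trans (hK1 i il) (leq_maxl _ _).
  by apply: leq_trans (hK2 _ _) (leq_maxr _ _); rewrite ltn_subLR // leqNgt il.
split.
- by rewrite addn_gt0 n10.
- move=> i /andP[i0 lin]; case: ifP => il; first by apply: hp1; rewrite i0.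
  case: eqP => [->//|/eqP ni].
  have h : 0 < i - n1 < n2.
    by rewrite subn_gt0 ltn_neqAle eq_sym ni leqNgt il /= ltn_subLR // leqNgt il.
  have := hp2 _ h; lia.
- move=> i lin; case: ifP => il.
    by apply: subset_trans (hb1 i il) (subsetUl _ _).
  apply: subset_trans (hb2 _ _) (subsetUr _ _).
  by rewrite ltn_subLR // leqNgt il.
- move=> w; rewrite inE => /orP[wW|wW].
    by have [i il wi] := hc1 w wW; exists i; rewrite ?il // ltn_addr.
  have [i il wi] := hc2 w wW; exists (n1 + i); first by rewrite ltn_add2l.
  by rewrite ltnNge leq_addr /= addKn.
move=> v vF; case/orP: (hF v vF) => h.
  apply: rooted_ext (hr1 v vF).
    move=> i; rewrite /Xof; case: ifP => il; first by rewrite (ltn_addr _ il).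
    rewrite /=; case: (boolP (i < n1 + n2)) => //= lin.
    by apply/esym/negbTE; rewrite negbK (disj_sub _ h) //; apply: hb2; rewrite ltn_subLR // leqNgt il.
  by move=> x /andP[-> _].
have XE : forall i, Xof (n1 + n2)
    (fun i => if i < n1 then b1 i else b2 (i - n1)) (A v) i =
    (n1 <= i) && Xof n2 b2 (A v) (i - n1).
  move=> i; rewrite /Xof; case: ifP => il.
    rewrite [n1 <= i]leqNgt il /= andbC (disj_sub _ h) ?andbF //; exact: hb1.
  by rewrite [n1 <= i]leqNgt il /= ltn_subLR // [n1 <= i]leqNgt il.
case: (hr2 v vF) => [emp|[r [Xr H]]].
  by left=> i; rewrite XE (negbTE (emp _)) andbF.
right; exists (n1 + r); split; first by rewrite XE leq_addr addKn.
move=> x; rewrite XE => /andP[xn Xx] xr.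
have xr' : x - n1 != r by apply: contra xr => /eqP <-; rewrite subnKC.
have [x0 Xp] := H _ Xx xr'.
have xn1 : ~~ (x < n1) by rewrite -leqNgt.
have xne : x != n1 by apply: contraTneq x0 => ->; rewrite subnn.
rewrite (negbTE xn1) (negbTE xne); split; first by lia.
by rewrite XE leq_addr addKn.
Qed.


Definition edges (W : {set T}) (F : {set V}) := [set v in F | 1 < #|A v :&: W|].
Definition mu (W : {set T}) (F : {set V}) := #|W| + #|edges W F|.
Definition delta (W : {set T}) (F : {set V}) : nat := [exists w in W, deg W F w <= 2].

Lemma lt_proper (X Y : {set V}) v : X \subset Y -> v \in Y -> v \notin X -> #|X| < #|Y|.
Proof. by move=> XY vY vX; apply: proper_card; apply/properP; split=> //; exists v. Qed.

Lemma card_disjU (X Y Z : {set V}) :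
  X :&: Y = set0 -> X :|: Y \subset Z -> #|X| + #|Y| <= #|Z|.
Proof. by move=> h s; rewrite -cardsUI h cards0 addn0 subset_leq_card. Qed.

Lemma cardIS (U W' W : {set T}) : W' \subset W -> #|U :&: W'| <= #|U :&: W|.
Proof. by move=> h; apply: subset_leq_card; apply: setIS. Qed.

Lemma dsetS (W' W : {set T}) (F' F : {set V}) x :
  W' \subset W -> F' \subset F -> dset W' F' x \subset dset W F x.
Proof.
move=> hW hF; apply/subsetP=> v; rewrite !inE => /andP[vF /andP[xv c]].
by rewrite (subsetP hF) // xv (leq_trans c) // cardIS.
Qed.

Lemma degS (W' W : {set T}) (F' F : {set V}) x :
  W' \subset W -> F' \subset F -> deg W' F' x <= deg W F x.
Proof. by move=> hW hF; apply: subset_leq_card; apply: dsetS. Qed.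

Lemma deg_lt (W' W : {set T}) (F' F : {set V}) x v :
  W' \subset W -> F' \subset F -> v \in dset W F x -> v \notin dset W' F' x ->
  deg W' F' x < deg W F x.
Proof. by move=> hW hF h1 h2; apply: lt_proper h1 h2; apply: dsetS. Qed.

Lemma Fa_sub (F : {set V}) a : Fa F a \subset F.
Proof. by apply/subsetP=> v; rewrite inE => /andP[]. Qed.

Lemma notin_Fa (W' : {set T}) (F : {set V}) a v y : a \in A v -> v \notin dset W' (Fa F a) y.
Proof. by move=> av; rewrite !inE av andbF. Qed.

Lemma edgesS (W' W : {set T}) (F' F : {set V}) :
  W' \subset W -> F' \subset F -> edges W' F' \subset edges W F.
Proof.
move=> hW hF; apply/subsetP=> v; rewrite !inE => /andP[vF c].
by rewrite (subsetP hF) // (leq_trans c) // cardIS.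
Qed.

Lemma mu_D1 (W : {set T}) (F F' : {set V}) a : a \in W -> F' \subset F ->
  mu (W :\ a) F' + 1 <= mu W F.
Proof.
move=> aW hF; rewrite /mu (cardsD1 a W) aW.
have := subset_leq_card (edgesS (subD1set W a) hF); lia.
Qed.

Lemma mu_apex (W : {set T}) (F : {set V}) a : a \in W ->
  mu (W :\ a) (Fa F a) + 1 + deg W F a <= mu W F.
Proof.
move=> aW; rewrite /mu (cardsD1 a W) aW /deg.
suff : #|edges (W :\ a) (Fa F a)| + #|dset W F a| <= #|edges W F| by lia.
apply: card_disjU.
  apply/setP=> v; rewrite !inE; apply/negbTE.
  by apply/negP=> /andP[/andP[/andP[_ /negP av] _] /andP[_ /andP[]]].
apply/subsetP=> v; rewrite !inE => /orP[/andP[/andP[vF _] c]|/andP[vF /andP[_ c]]].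
  by rewrite vF (leq_trans c) // cardIS // subD1set.
by rewrite vF.
Qed.

Lemma delta_le1 (W : {set T}) (F : {set V}) : delta W F <= 1.
Proof. by rewrite /delta; case: existsP. Qed.

Lemma delta1 (W : {set T}) (F : {set V}) x : x \in W -> deg W F x <= 2 -> delta W F = 1.
Proof.
move=> xW d; rewrite /delta; case: existsP => // [[]].
by exists x; rewrite xW d.
Qed.

Lemma card3 (S : {set T}) a x y : a \in S -> x \in S -> y \in S ->
  x != a -> y != a -> y != x -> 2 < #|S|.
Proof.
move=> aS xS yS xa ya yx; rewrite (cardsD1 a S) aS add1n ltnS.
by apply: (card2 (a:=x) (y:=y)); rewrite ?in_setD1 ?xa ?ya.
Qed.


Definition nbr (W : {set T}) (F : {set V}) a :=
  [set y in W | (y != a) && [exists v in dset W F a, y \in A v]].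

Lemma nbr_of_edge (W : {set T}) (F : {set V}) a y v :
  v \in F -> a \in A v -> y \in A v -> a \in W -> y \in W -> y != a -> y \in nbr W F a.
Proof.
move=> vF av yv aW yW ya; rewrite inE yW ya /=; apply/existsP; exists v.
by rewrite yv andbT inE vF av /=; apply: (card2 (a:=a) (y:=y)); rewrite // inE ?av ?yv ?aW ?yW.
Qed.

Lemma nbrE (W : {set T}) (F : {set V}) a y : y \in nbr W F a ->
  [/\ y \in W, y != a & exists v, [/\ v \in F, a \in A v, y \in A v & 1 < #|A v :&: W|]].
Proof.
rewrite inE => /andP[yW /andP[ya /existsP[v /andP[]]]].
by rewrite inE => /andP[vF /andP[av c]] yv; split=> //; exists v.
Qed.

Lemma nbr_sym (W : {set T}) (F : {set V}) a y : a \in W -> y \in nbr W F a -> a \in nbr W F y.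
Proof.
move=> aW /nbrE [yW ya [v [vF av yv _]]].
by apply: (nbr_of_edge (v:=v)); rewrite // eq_sym.
Qed.

Lemma nbr_drop (W W' : {set T}) (F : {set V}) a y : y \in nbr W F a -> W' \subset W ->
  deg W' (Fa F a) y < deg W F y.
Proof.
move=> /nbrE [yW ya [v [vF av yv c]]] sW.
apply: (deg_lt (v:=v)) => //; first exact: Fa_sub.
  by rewrite inE vF yv.
exact: notin_Fa.
Qed.

Lemma pick1 (S : {set T}) : 0 < #|S| -> exists b, b \in S.
Proof. by move/card_gt0P. Qed.

Lemma pick2 (S : {set T}) : 1 < #|S| -> exists b c, [/\ b \in S, c \in S & c != b].
Proof.
move=> h; have [b bS] : exists b, b \in S by apply/card_gt0P; lia.
have [c] : exists c, c \in S :\ b.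
  by apply/card_gt0P; move: h; rewrite (cardsD1 b) bS; lia.
by rewrite in_setD1 => /andP[cb cS]; exists b, c.
Qed.

Lemma pick3 (S : {set T}) : 2 < #|S| ->
  exists b c d, [/\ b \in S, c \in S, d \in S & [/\ c != b, d != b & d != c]].
Proof.
move=> h; have [b bS] : exists b, b \in S by apply/card_gt0P; lia.
have [c [d [cS dS dc]]] : exists c d, [/\ c \in S :\ b, d \in S :\ b & d != c].
  by apply: pick2; move: h; rewrite (cardsD1 b) bS; lia.
move: cS dS; rewrite !in_setD1 => /andP[cb cS] /andP[db dS].
by exists b, c, d.
Qed.

Lemma other (S : {set T}) a : 1 < #|S| -> exists y, y \in S /\ y != a.
Proof.
move=> h; have [y] : exists y, y \in S :\ a.
  apply/card_gt0P; move: h; rewrite (cardsD1 a S); case: (a \in S); lia.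
by rewrite in_setD1 => /andP[ya yS]; exists y.
Qed.

Lemma D1ne (W : {set T}) a : a \in W -> W :\ a != W.
Proof. by move=> aW; apply/eqP=> h; move: aW; rewrite -h in_setD1 eqxx. Qed.


Lemma arA K d d' m m' D : 5 * K + d' <= m' + 20 -> m' + 1 + D <= m -> 3 < D -> d <= d' ->
  5 * K.+1 + d <= m + 20.
Proof. lia. Qed.
Lemma arB K d m m' D : 5 * K + 1 <= m' + 20 -> m' + 1 + D <= m -> 2 < D -> d = 0 ->
  5 * K.+1 + d <= m + 20.
Proof. lia. Qed.
Lemma arC K d m m1 m2 D : 5 * K + 1 <= m2 + 20 -> m2 + 1 <= m1 -> m1 + 1 + D <= m -> D = 3 ->
  d <= 1 -> 5 <= m -> 5 * (maxn K 1).+1 + d <= m + 20.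
Proof. lia. Qed.
Lemma arD K d d4 m m1 m2 m3 m4 D : 5 * K + d4 <= m4 + 20 -> m4 + 1 <= m3 -> m3 + 1 <= m2 ->
  m2 + 1 <= m1 -> m1 + 1 + D <= m -> D = 2 -> d <= 1 -> 5 <= m ->
  5 * (maxn (maxn (maxn K 1) 1) 1).+1 + d <= m + 20.
Proof. lia. Qed.
Lemma arE K d m m1 m2 m3 D : 5 * K + 1 <= m3 + 20 -> m3 + 1 <= m2 ->
  m2 + 1 <= m1 -> m1 + 1 + D <= m -> D = 2 -> d <= 1 -> 5 <= m ->
  5 * (maxn (maxn K 1) 1).+1 + d <= m + 20.
Proof. lia. Qed.

Lemma two_of d : 1 < d -> d <= 3 -> d != 3 -> d = 2.
Proof. lia. Qed.

Lemma ne_of (W' W : {set T}) z : z \in W -> z \notin W' -> W' != W.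
Proof. by move=> zW zW'; apply/eqP=> h; move: zW'; rewrite h zW. Qed.

Lemma main_abs (W : {set T}) (F : {set V}) :
  exists K, dec W F K /\ 5 * K + delta W F <= mu W F + 20.
Proof.
move: {2}#|W| (leqnn #|W|) => N; elim: N W F => [|N IH] W F hN.
  exists #|W|; split; first exact: dec_single.
  by have := delta_le1 W F; rewrite /mu; lia.
have hd1 := delta_le1 W F.
have muW : #|W| <= mu W F by rewrite /mu leq_addr.
case: (leqP #|W| 4) => [s4|s5].
  exists #|W|; split; first exact: dec_single.
  by rewrite /mu; lia.
have IHs : forall (W' : {set T}) (F' : {set V}), W' \subset W -> W' != W ->
    exists K, dec W' F' K /\ 5 * K + delta W' F' <= mu W' F' + 20.
  move=> W' F' sub ne; apply: IH.
  have : #|W'| < #|W| by apply: proper_card; rewrite properEneq ne sub.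
  lia.
case: (boolP [exists a in W, deg W F a <= 1]) => [/existsP [a /andP[aW da]]|nolow].
  have [K [dK bK]] := IHs (W :\ a) F (subD1set _ _) (D1ne aW).
  exists (maxn K 1); split; first exact: dec_peel dK.
  have := mu_D1 aW (subxx F); have := delta_le1 (W :\ a) F; lia.
have low : forall a, a \in W -> 1 < deg W F a.
  move=> a aW; rewrite ltnNge; apply: contra nolow => h.
  by apply/existsP; exists a; rewrite aW.
case: (boolP [exists Z : {set T}, [&& Z \subset W, Z != set0, Z != W &
    [forall v in F, (A v :&: (W :\: Z) == set0) || (A v :&: Z == set0)]]])
  => [/existsP [Z /and4P[ZW Z0 ZnW /forallP hZ]]|conn].
  have [z zZ] : exists z, z \in Z by apply/set0Pn.
  have W2ne : W :\: Z != W.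
    by apply/eqP=> h; move: (subsetP ZW z zZ); rewrite -h inE zZ.
  have [K1 [d1 b1]] := IHs Z F ZW ZnW.
  have [K2 [d2 b2]] := IHs (W :\: Z) F (subsetDl _ _) W2ne.
  have hF : forall v, v \in F -> (A v :&: (W :\: Z) == set0) || (A v :&: Z == set0).
    by move=> v vF; have := hZ v; rewrite vF.
  have eW : Z :|: (W :\: Z) = W by rewrite -[in RHS](setID W Z) (setIidPr ZW).
  exists (maxn K1 K2); split; first by rewrite -eW; exact: dec_join hF d1 d2.
  have cW : #|Z| + #|W :\: Z| = #|W| by rewrite -(cardsID Z W) (setIidPr ZW).
  have cE : #|edges Z F| + #|edges (W :\: Z) F| <= #|edges W F|.
    apply: card_disjU.
      apply/setP=> v; rewrite !inE; apply/negbTE/negP => /andP[/andP[vF c1] /andP[_ c2]].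
      by move/orP: (hF v vF) => [/eqP h|/eqP h]; [move: c2|move: c1]; rewrite h cards0.
    by rewrite subUset !edgesS ?subsetDl.
  have z1 : 0 < #|Z| by rewrite card_gt0.
  have z2 : 0 < #|W :\: Z|.
    have : Z \proper W by rewrite properEneq ZnW ZW.
    case/properP=> _ [w wW wZ]; apply/card_gt0P; exists w; by rewrite inE wW wZ.
  have := delta_le1 Z F; have := delta_le1 (W :\: Z) F.
  rewrite /mu in b1 b2 *; lia.
have hconn : forall Z : {set T}, Z \subset W -> Z != set0 -> Z != W -> exists v,
    [/\ v \in F, A v :&: (W :\: Z) != set0 & A v :&: Z != set0].
  move=> Z ZW Z0 ZnW; move/existsPn: conn => /(_ Z); rewrite ZW Z0 ZnW /=.
  by case/forallPn=> v; rewrite negb_imply negb_or => /andP[vF /andP[h1 h2]]; exists v.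
case: (boolP [exists a in W, 3 < deg W F a]) => [/existsP [a /andP[aW da]]|nohigh].
  have [K [dK bK]] := IHs (W :\ a) (Fa F a) (subD1set _ _) (D1ne aW).
  exists K.+1; split; first exact: dec_apex aW dK.
  have ma := mu_apex F aW.
  have dd : delta W F <= delta (W :\ a) (Fa F a).
    rewrite {1}/delta; case: existsP => [[x /andP[xW dx]]|_]; last done.
    have xa : x != a by apply: contraTneq dx => ->; rewrite -ltnNge ltnW.
    rewrite (@delta1 _ _ x) ?in_setD1 ?xa //.
    by apply: leq_trans dx; apply: degS; [exact: subD1set|exact: Fa_sub].
  exact: arA bK ma da dd.
have hi : forall a, a \in W -> deg W F a <= 3.
  move=> a aW; rewrite leqNgt; apply: contra nohigh => h.
  by apply/existsP; exists a; rewrite aW.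
case: (boolP [exists b in W, deg W F b <= 2]) => [/existsP [b0 /andP[b0W db0]]|nolow2]; last first.
  have d0 : delta W F = 0 by rewrite /delta (negbTE nolow2).
  have [a aW] : exists a, a \in W by apply/card_gt0P; exact: leq_ltn_trans (leq0n 4) s5.
  have da : 2 < deg W F a.
    by rewrite ltnNge; apply: contra nolow2 => h; apply/existsP; exists a; rewrite aW.
  have [v vd] : exists v, v \in dset W F a by apply/card_gt0P; exact: leq_ltn_trans (leq0n 2) da.
  move: (vd); rewrite inE => /andP[vF /andP[av c]].
  have [x [xS xa]] := other a c.
  move: xS; rewrite inE => /andP[xv xW].
  have dx : deg (W :\ a) (Fa F a) x < deg W F x.
    apply: (deg_lt (v:=v)); [exact: subD1set|exact: Fa_sub|by rewrite inE vF xv c|exact: notin_Fa].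
  have d' : delta (W :\ a) (Fa F a) = 1.
    by apply: (@delta1 _ _ x); [rewrite in_setD1 xa xW|rewrite -ltnS; exact: leq_trans dx (hi x xW)].
  have [K [dK bK]] := IHs (W :\ a) (Fa F a) (subD1set _ _) (D1ne aW).
  exists K.+1; split; first exact: dec_apex aW dK.
  by move: bK; rewrite d' => bK; exact: arB bK (mu_apex F aW) da d0.
case: (boolP [exists a in W, deg W F a == 3]) => [/existsP [a0 /andP[a0W da0]]|no3].
  pose Z := [set w in W | deg W F w == 3].
  have ZW : Z \subset W by apply/subsetP=> w; rewrite inE => /andP[].
  have Z0 : Z != set0 by apply/set0Pn; exists a0; rewrite inE a0W da0.
  have ZnW : Z != W.
    apply: (ne_of b0W); rewrite inE b0W /=; apply/negP=> /eqP h; by rewrite h in db0.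
  have [v [vF h1 h2]] := hconn Z ZW Z0 ZnW.
  have [x] := set0Pn _ h1; rewrite inE in_setD => /andP[xv /andP[xZ xW]].
  have [z] := set0Pn _ h2; rewrite inE => /andP[zv zZ].
  move: xZ zZ; rewrite !inE xW /= => xZ /andP[zW /eqP dz].
  have dx : deg W F x = 2 by apply: two_of (low x xW) (hi x xW) xZ.
  have xz : x != z by apply/eqP=> e; move: dx; rewrite e dz.
  have c : 1 < #|A v :&: W| by apply: (card2 (a:=z) (y:=x)); rewrite // inE ?zv ?xv ?zW ?xW.
  have vdx : v \in dset W F x by rewrite inE vF xv c.
  have dx1 : deg (W :\ z) (Fa F z) x < deg W F x.
    apply: (deg_lt (v:=v)); [exact: subD1set|exact: Fa_sub|exact: vdx|exact: notin_Fa].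
  have [u ud ux] : exists2 u, u \in dset W F z & u \notin dset W F x.
    apply/subsetPn; apply/negP=> sub; have := subset_leq_card sub.
    by rewrite -/(deg W F z) -/(deg W F x) dz dx.
  move: (ud); rewrite inE => /andP[uF /andP[zu cu]].
  have xu : x \notin A u by apply: contra ux => xu; rewrite inE uF xu cu.
  have [y [yS yz]] := other z cu.
  move: yS; rewrite inE => /andP[yu yW].
  have yx : y != x by apply: contraNneq xu => <-.
  have yW2 : y \in W :\ z :\ x by rewrite !in_setD1 yx yz yW.
  have sW2 : W :\ z :\ x \subset W by apply: subset_trans (subD1set _ _) (subD1set _ _).
  have dy : deg (W :\ z :\ x) (Fa F z) y < deg W F y.
    apply: (deg_lt (v:=u)); [exact: sW2|exact: Fa_sub|by rewrite inE uF yu cu|exact: notin_Fa].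
  have d2 : delta (W :\ z :\ x) (Fa F z) = 1.
    by apply: (@delta1 _ _ y) => //; rewrite -ltnS; exact: leq_trans dy (hi y yW).
  have xW1 : x \in W :\ z by rewrite in_setD1 xz xW.
  have zW2 : z \notin W :\ z :\ x by rewrite !in_setD1 eqxx andbF.
  have [K [dK bK]] := IHs (W :\ z :\ x) (Fa F z) sW2 (ne_of zW zW2).
  exists (maxn K 1).+1; split.
    by apply: dec_apex zW _; apply: dec_peel xW1 _ dK; move: dx1; rewrite dx.
  have m1 := mu_D1 xW1 (subxx (Fa F z)); have m2 := mu_apex F zW.
  move: bK; rewrite d2 => bK.
  by apply: (arC bK m1 m2) => //; apply: leq_trans muW.
have d2 : forall w, w \in W -> deg W F w = 2.
  move=> w wW; apply: two_of (low w wW) (hi w wW) _.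
  by apply: contra no3 => h; apply/existsP; exists w; rewrite wW.
case: (boolP [exists a in W, 2 < #|nbr W F a|]) => [/existsP [a /andP[aW na]]|nonbr].
  have [b [c [d [bN cN dN [cb db dc]]]]] := pick3 na.
  have [bW ba _] := nbrE bN; have [cW ca _] := nbrE cN; have [dW da _] := nbrE dN.
  have bW1 : b \in W :\ a by rewrite in_setD1 ba bW.
  have cW2 : c \in W :\ a :\ b by rewrite !in_setD1 cb ca cW.
  have dW3 : d \in W :\ a :\ b :\ c by rewrite !in_setD1 dc db da dW.
  have s1 : W :\ a \subset W := subD1set _ _.
  have s2 : W :\ a :\ b \subset W := subset_trans (subD1set _ _) s1.
  have s3 : W :\ a :\ b :\ c \subset W := subset_trans (subD1set _ _) s2.
  have s4 : W :\ a :\ b :\ c :\ d \subset W := subset_trans (subD1set _ _) s3.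
  have aW4 : a \notin W :\ a :\ b :\ c :\ d by rewrite !in_setD1 eqxx !andbF.
  have [K [dK bK]] := IHs _ (Fa F a) s4 (ne_of aW aW4).
  exists (maxn (maxn (maxn K 1) 1) 1).+1; split.
    apply: dec_apex aW _; apply: dec_peel bW1 _ _.
      by have := nbr_drop bN s1; rewrite (d2 b bW).
    apply: dec_peel cW2 _ _; first by have := nbr_drop cN s2; rewrite (d2 c cW).
    apply: dec_peel dW3 _ dK; by have := nbr_drop dN s3; rewrite (d2 d dW).
  have m4 := mu_D1 dW3 (subxx (Fa F a)).
  have m3 := mu_D1 cW2 (subxx (Fa F a)).
  have m2 := mu_D1 bW1 (subxx (Fa F a)).
  have m1 := mu_apex F aW.
  by apply: (arD bK m4 m3 m2 m1) => //; [exact: d2|apply: leq_trans muW].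
have hn : forall a, a \in W -> #|nbr W F a| <= 2.
  move=> a aW; rewrite leqNgt; apply: contra nonbr => h.
  by apply/existsP; exists a; rewrite aW.
have [a aW] : exists a, a \in W by apply/card_gt0P; exact: leq_ltn_trans (leq0n 4) s5.
have n1 : 0 < #|nbr W F a|.
  have [v vd] : exists v, v \in dset W F a by apply/card_gt0P; rewrite -/(deg W F a) d2.
  move: (vd); rewrite inE => /andP[vF /andP[av c]].
  have [y [yS ya]] := other a c; move: yS; rewrite inE => /andP[yv yW].
  by apply/card_gt0P; exists y; apply: (nbr_of_edge vF av yv aW yW ya).
have n2 : 1 < #|nbr W F a|.
  rewrite ltnNge; apply/negP => le1.
  have [b bN] := pick1 n1.
  have eb : forall y, y \in nbr W F a -> y = b.
    by move=> y yN; move/card_le1_eqP: le1 => h; apply: h.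
  have [bW ba _] := nbrE bN.
  pose Z := [set a; b].
  have ZW : Z \subset W by rewrite subUset !sub1set aW bW.
  have Z0 : Z != set0 by apply/set0Pn; exists a; rewrite !inE eqxx.
  have ZnW : Z != W.
    apply/eqP=> h; move: s5; rewrite -h cards2.
    by case: (a != b).
  have [v [vF h1 h2]] := hconn Z ZW Z0 ZnW.
  have [x] := set0Pn _ h1; rewrite inE in_setD => /andP[xv /andP[xZ xW]].
  have [z] := set0Pn _ h2; rewrite inE => /andP[zv zZ].
  move: xZ zZ; rewrite !inE negb_or => /andP[xa xb] zZ.
  have av : a \notin A v.
    apply/negP=> av; have := eb x (nbr_of_edge vF av xv aW xW xa).
    by move/eqP; rewrite (negbTE xb).
  have bv : b \in A v.
    by case/orP: zZ => /eqP ez; [move: av; rewrite -ez zv|rewrite -ez].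
  have sub : dset W F a \subset dset W F b.
    apply/subsetP=> u; rewrite !inE => /andP[uF /andP[au cu]].
    have [y [yS ya]] := other a cu; move: yS; rewrite inE => /andP[yu yW].
    have := eb y (nbr_of_edge uF au yu aW yW ya) => eyb.
    by rewrite uF -eyb yu cu.
  have c : 1 < #|A v :&: W| by apply: (card2 (a:=b) (y:=x)); rewrite // inE ?bv ?xv ?bW ?xW.
  have vb : v \in dset W F b by rewrite inE vF bv c.
  have va : v \notin dset W F a by rewrite inE (negbTE av) andbF.
  have := lt_proper sub vb va.
  by rewrite -/(deg W F a) -/(deg W F b) (d2 a aW) (d2 b bW) ltnn.
have [b [c [bN cN cb]]] := pick2 n2.
have [bW ba _] := nbrE bN; have [cW ca _] := nbrE cN.
have bW1 : b \in W :\ a by rewrite in_setD1 ba bW.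
have cW2 : c \in W :\ a :\ b by rewrite !in_setD1 cb ca cW.
have s1 : W :\ a \subset W := subD1set _ _.
have s2 : W :\ a :\ b \subset W := subset_trans (subD1set _ _) s1.
have s3 : W :\ a :\ b :\ c \subset W := subset_trans (subD1set _ _) s2.
have aW3 : a \notin W :\ a :\ b :\ c by rewrite !in_setD1 eqxx !andbF.
have d3 : delta (W :\ a :\ b :\ c) (Fa F a) = 1.
  pose Z := [set a; b; c].
  have ZW : Z \subset W by rewrite !subUset !sub1set aW bW cW.
  have Z0 : Z != set0 by apply/set0Pn; exists a; rewrite !inE eqxx.
  have ZnW : Z != W.
    apply/eqP=> h; move: s5; rewrite -h.
    have : #|Z| <= 3.
      rewrite /Z; apply: leq_trans (leq_card_setU _ _) _; rewrite cards1 addn1 ltnS.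
      by rewrite cardsU1 cards1; case: (a \notin _).
    by move=> h3 h5; have := leq_trans h5 h3.
  have [v [vF h1 h2]] := hconn Z ZW Z0 ZnW.
  have [x] := set0Pn _ h1; rewrite inE in_setD => /andP[xv /andP[xZ xW]].
  have [z] := set0Pn _ h2; rewrite inE => /andP[zv zZ].
  move: xZ zZ; rewrite !inE !negb_or => /andP[/andP[xa xb] xc] zZ.
  have av : a \notin A v.
    apply/negP=> av; have xN := nbr_of_edge vF av xv aW xW xa.
    by have := card3 bN cN xN cb xb xc; rewrite ltnNge (hn a aW).
  have zbc : (z == b) || (z == c).
    by case/orP: zZ => [/orP[/eqP ez|->//]|->]; [move: av; rewrite -ez zv|rewrite orbT].
  have zN : z \in nbr W F a by case/orP: zbc => /eqP ->.
  have [zW za _] := nbrE zN.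
  have xz : x != z by case/orP: zbc => /eqP ->.
  have aNz := nbr_sym aW zN.
  have xNz := nbr_of_edge vF zv xv zW xW xz.
  have c1 : #|A v :&: (W :\ a :\ b :\ c)| <= 1.
    rewrite leqNgt; apply/negP => h.
    have [y [yS yx]] := other x h.
    move: yS; rewrite inE !in_setD1 => /andP[yv /andP[yc /andP[yb /andP[ya yW]]]].
    have yz : y != z by case/orP: zbc => /eqP ->.
    have yNz := nbr_of_edge vF zv yv zW yW yz.
    by have := card3 aNz xNz yNz xa ya yx; rewrite ltnNge (hn z zW).
  have cv : 1 < #|A v :&: W| by apply: (card2 (a:=z) (y:=x)); rewrite // inE ?zv ?xv ?zW ?xW.
  apply: (@delta1 _ _ x); first by rewrite !in_setD1 xc xb xa xW.
  have vx : v \in dset W F x by rewrite inE vF xv cv.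
  have vx3 : v \notin dset (W :\ a :\ b :\ c) (Fa F a) x.
    by rewrite !inE; apply/negP=> /andP[_ /andP[_ h]]; move: c1; rewrite leqNgt h.
  by have := deg_lt s3 (Fa_sub F a) vx vx3; rewrite (d2 x xW) => h; exact: ltnW h.
have [K [dK bK]] := IHs _ (Fa F a) s3 (ne_of aW aW3).
exists (maxn (maxn K 1) 1).+1; split.
  apply: dec_apex aW _; apply: dec_peel bW1 _ _.
    by have := nbr_drop bN s1; rewrite (d2 b bW).
  by apply: dec_peel cW2 _ dK; have := nbr_drop cN s2; rewrite (d2 c cW).
have m3 := mu_D1 cW2 (subxx (Fa F a)); have m2 := mu_D1 bW1 (subxx (Fa F a)).
have m1 := mu_apex F aW.
move: bK; rewrite d3 => bK.
by apply: (arE bK m3 m2 m1) => //; [exact: d2|apply: leq_trans muW].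
Qed.

End Abstract.

Section Tree.
Variables (n : nat) (par : nat -> nat).
Hypothesis hp : forall i, 0 < i < n -> par i < i.

Definition tr : rel 'I_n := fun i j =>
  ((0 < i) && (par i == j)) || ((0 < j) && (par j == i)).

Lemma tr_sym : symmetric tr.
Proof. by move=> i j; rewrite /tr orbC. Qed.

Lemma tr_irr : irreflexive tr.
Proof.
move=> i; rewrite /tr orbb; apply/negP=> /andP[i0 /eqP h].
by have := hp (i:=i); rewrite i0 ltn_ord h ltnn => /(_ isT).
Qed.

Definition trX (X : pred nat) : rel 'I_n := fun i j => tr i j && X i && X j.

Lemma pathX (X : pred nat) x p : path (trX X) x p -> forall z, z \in p -> X z.
Proof.
elim: p x => [//|y p IH] x /= /andP[/andP[_ Xy] hp'] z.
by rewrite inE => /orP[/eqP->//|]; move: hp'; move=> h; apply: IH h z.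
Qed.

Lemma conn_root (X : pred nat) (r : 'I_n) :
  (forall x, X x -> x != r -> 0 < x /\ X (par x)) ->
  forall x : 'I_n, X x -> connect (trX X) x r.
Proof.
move=> H x; move: {2}(val x) (leqnn (val x)) => m; elim: m x => [|m IH] x hx Xx.
  have x0 : val x = 0 by lia.
  case: (eqVneq (val x) r) => [e|ne]; first by rewrite (val_inj e) connect0.
  by have [] := H x Xx ne; rewrite x0.
case: (eqVneq (val x) r) => [e|ne]; first by rewrite (val_inj e) connect0.
have [x0 Xp] := H x Xx ne.
have pl : par x < x by apply: hp; rewrite x0 ltn_ord.
have pn : par x < n by apply: ltn_trans pl (ltn_ord x).
apply: (connect_trans (y := Ordinal pn)).
  by apply: connect1; rewrite /trX /tr /= x0 eqxx Xx Xp.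
by apply: IH => //=; exact: leq_trans pl hx.
Qed.

Lemma trX_sym X : symmetric (trX X).
Proof. by move=> i j; rewrite /trX tr_sym; case: (X i); case: (X j); rewrite ?andbF ?andbT. Qed.

Lemma rooted_path (X : pred nat) (r : 'I_n) :
  X r -> (forall x, X x -> x != r -> 0 < x /\ X (par x)) ->
  forall x y : 'I_n, X x -> X y ->
  exists p, [/\ path tr x p, last x p = y, uniq (x :: p) & forall z, z \in x :: p -> X z].
Proof.
move=> Xr H x y Xx Xy.
have c : connect (trX X) x y.
  apply: connect_trans (conn_root H Xx) _.
  rewrite (sym_connect_sym (@trX_sym X)); exact: (@conn_root X r H y Xy).
case/connectP: c => p0 hp0 ->.
case: (shortenP hp0) => p hp1 up _.
exists p; split=> //.
  by apply: sub_path hp1 => i j /andP[/andP[]].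
move=> z; rewrite inE => /orP[/eqP->//|]; exact: (@pathX X x p hp1).
Qed.


Definition pp (i : nat) := if i == 0 then 0 else par i.
Definition anc (z w : nat) := exists k, iter k pp w = z.

Lemma iter_le w k : w < n -> iter k pp w <= w.
Proof.
move=> wn; elim: k => [//|k IH]; rewrite iterS.
refine (leq_trans _ IH); rewrite /pp; case: eqP => [->//|/eqP u0].
apply: ltnW; apply: hp; rewrite lt0n u0 /=.
exact: leq_ltn_trans IH wn.
Qed.

Lemma anc_le z w : w < n -> anc z w -> z <= w.
Proof. by move=> wn [k <-]; apply: iter_le. Qed.

Lemma sub_stay (z : 'I_n) (y0 : 'I_n) : nat_of_ord y0 = par z ->
  forall (w : 'I_n) p, anc z w -> path tr w p -> y0 \notin w :: p ->
  forall u, u \in w :: p -> anc z u.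
Proof.
move=> ey; move=> w p; elim: p w => [|u p IH] w aw.
  by move=> _ _ u; rewrite inE => /eqP->.
rewrite /= => /andP[twu pu] yn.
have au : anc z u.
  case/orP: twu => /andP[h0 /eqP h].
    case: (eqVneq (val w) (val z)) => [ewz|nwz].
      have yu : y0 = u by apply: val_inj => /=; rewrite ey -h; congr par; exact: (esym ewz).
      by move: yn; rewrite yu !inE eqxx orbT.
    case: aw => [[|k] hk]; first by case/negP: nwz; apply/eqP; exact: hk.
    exists k; rewrite -hk iterSr /pp.
    by move: h0; rewrite lt0n => /negbTE ->; rewrite h.
  case: aw => k hk; exists k.+1; rewrite iterSr /pp.
  by move: h0; rewrite lt0n => /negbTE ->; rewrite h.
move=> u0; rewrite inE => /orP[/eqP->//|hu0].
apply: (IH u au pu _ u0 hu0); apply: contra yn => h; by rewrite inE h orbT.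
Qed.

Definition spath (x y : 'I_n) p := [&& path tr x p, last x p == y & uniq (x :: p)].

Lemma spath_nil x p : spath x x p -> p = [::].
Proof.
case: p => [//|u p] /and3P[_ /eqP hl hu].
have : last x (u :: p) \in u :: p := mem_last u p.
by rewrite hl => hx; move: hu; rewrite /= hx.
Qed.

Lemma step (x y : 'I_n) p : y < x -> spath x y p ->
  exists x' : 'I_n, exists p', [/\ nat_of_ord x' = par x, p = x' :: p' & spath x' y p'].
Proof.
move=> yx; case: p => [|u p] /and3P[hpath /eqP hl hu].
  by move: yx; rewrite -hl ltnn.
move: hpath => /= /andP[txu pu].
case/orP: txu => /andP[h0 /eqP h].
  exists u, p; split=> //; apply/and3P; split=> //; first by apply/eqP.
  by case/andP: hu.
exfalso.
have ey : nat_of_ord x = par u by rewrite h.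
have := sub_stay ey (w:=u) (p:=p) (ex_intro _ 0 erefl) pu.
move: hu => /= /andP[xn _] /(_ xn y).
rewrite -hl => /(_ (mem_last u p)) au.
have := anc_le (ltn_ord _) au.
have : par u < u by apply: hp; rewrite h0 ltn_ord.
rewrite -ey hl; move: yx; lia.
Qed.

Lemma rev_spath x y p : spath x y p -> spath y x (rev (belast x p)).
Proof.
case/and3P=> hpath /eqP hl hu.
have E : y :: rev (belast x p) = rev (x :: p) by rewrite [x :: p]lastI rev_rcons hl.
apply/and3P; split.
- have := rev_path tr x p; rewrite hl => ->.
  by rewrite (eq_path (e' := tr)) // => i j /=; rewrite tr_sym.
- apply/eqP; have -> : last y (rev (belast x p)) = last y (y :: rev (belast x p)) by [].
  by rewrite E rev_cons last_rcons.
- by rewrite E rev_uniq.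
Qed.

Lemma rev_inj (x y : 'I_n) (p q : seq 'I_n) : last x p = y -> last x q = y ->
  rev (belast x p) = rev (belast x q) -> p = q.
Proof.
move=> hp' hq /(congr1 rev); rewrite !revK => e.
have : x :: p = x :: q by rewrite !lastI e hp' hq.
by case.
Qed.

Lemma uniq_path N : forall x y : 'I_n, x + y <= N -> forall p q,
  spath x y p -> spath x y q -> p = q.
Proof.
elim: N => [|N IH] x y.
  move=> h p q sp sq.
  have exy : x = y by apply: val_inj; move: h; rewrite leqn0 addn_eq0 => /andP[/eqP hx /eqP hy]; rewrite /= hx hy.
  by move: sp sq; rewrite exy => /spath_nil -> /spath_nil ->.
move=> h.
have gt : forall (x y : 'I_n), y < x -> x + y <= N.+1 -> forall p q,
    spath x y p -> spath x y q -> p = q.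
  move=> x1 y1 yx h1 p q sp sq.
  have [x' [p' [ex' -> sp']]] := step yx sp.
  have [x'' [q' [ex'' -> sq']]] := step yx sq.
  have e : x'' = x' by apply: val_inj => /=; rewrite ex' ex''.
  rewrite e in sq' *; congr (_ :: _); apply: (IH x' y1) => //.
  have : par x1 < x1 by apply: hp; rewrite ltn_ord (leq_ltn_trans _ yx).
  rewrite -ex'; lia.
case: (ltngtP x y) => [xy|yx|exy].
- move=> p q sp sq.
  have sp' := rev_spath sp; have sq' := rev_spath sq.
  have hyx : y + x <= N.+1 by rewrite addnC.
  have := gt y x xy hyx _ _ sp' sq'.
  case/and3P: sp => _ /eqP hl _; case/and3P: sq => _ /eqP hl' _.
  exact: rev_inj hl hl'.
- exact: gt.
- move=> p q; have e : x = y by apply: val_inj.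
  by rewrite e => /spath_nil -> /spath_nil ->.
Qed.

Lemma tree_ok : 0 < n -> is_tree tr.
Proof.
move=> n0; split; [exact: tr_sym|split; [exact: tr_irr|]].
move=> x y.
have H : forall x0 : nat, true -> x0 != Ordinal n0 -> 0 < x0 /\ true.
  by move=> x0 _ xr; split=> //; rewrite lt0n.
have [p [h1 h2 h3 _]] := @rooted_path (fun _ => true) (Ordinal n0) isT H x y isT isT.
exists p; split; first by rewrite h1 h2 eqxx h3.
move=> q hq; apply: (@uniq_path (x + y) x y (leqnn _)) => //.
by rewrite /spath h1 h2 eqxx h3.
Qed.

End Tree.

Lemma src_conn (V : finType) (e : rel V) u v :
  v \in sources e -> connect e u v -> u = v.
Proof.
move=> vs /connectP [p pp ev]; subst v; move: pp vs.
case/lastP: p => [//|p y]; rewrite rcons_path last_rcons => /andP[_ h].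
by rewrite inE => /forallP /(_ (last u p)); rewrite h.
Qed.

Local Open Scope ring_scope.

Theorem mainTheorem19 (V : finType) (e : rel V) :
  is_dag e ->
  exists (I : finType) (t : rel I) (bag : I -> {set V}),
    dag_tree_decomposition e t bag /\
    ((dtd_width bag)%:R : rat) <= (#|V|%:R / 5%:R + 4%:R).
Proof.
move=> _.
pose A := fun v : V => [set u | connect e u v].
have [K [[n [par [bag [[n0 hp hb hc hr] hK]]]] hb5]] := main_abs A (sources e) setT.
have hm : (mu A (sources e) setT <= #|V|)%N.
  rewrite /mu -(cardsC (sources e)) leq_add2l; apply: subset_leq_card.
  apply/subsetP=> v; rewrite !inE => c; apply/negP=> vs.
  suff : (#|A v :&: sources e| <= 1)%N by rewrite leqNgt; move: c; rewrite andTb => ->.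
  rewrite -(cards1 v); apply: subset_leq_card; apply/subsetP=> u.
  have vs' : v \in sources e by rewrite inE.
  by rewrite !inE => /andP[cu us]; rewrite (src_conn vs' cu).
have wK : (dtd_width (fun i : 'I_n => bag i) <= K)%N.
  by apply/bigmax_leqP => i _; apply: hK.
exists ('I_n : finType), (tr par), (fun i : 'I_n => bag i); split.
  split.
  - exact: tree_ok hp n0.
  - by move=> i; apply: hb.
  - by move=> s ss; have [i lin si] := hc s ss; exists (Ordinal lin).
  move=> i i1 i2 hpath; apply/subsetP=> v; rewrite inE => /andP[v1 v2].
  have Xof_of : forall j : 'I_n, v \in reachB e (bag j) -> Xof n bag (A v) j.
    move=> j /bigcupP [s sj]; rewrite inE => sv.
    by rewrite /Xof ltn_ord /=; apply/set0Pn; exists s; rewrite !inE sj sv.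
  have X1 := Xof_of i1 v1; have X2 := Xof_of i2 v2.
  case: (hr v (in_setT v)) => [emp|[r [Xr H]]].
    by move: (emp i1); rewrite X1.
  have rn : (r < n)%N by case/andP: Xr.
  have [p [h1 h2 h3 h4]] := @rooted_path n par hp (Xof n bag (A v)) (Ordinal rn) Xr H i1 i2 X1 X2.
  have := h4 i (hpath p h1 h2 h3); case/andP=> _ /set0Pn [s]; rewrite inE => /andP[si sv].
  apply/bigcupP; exists s => //; by rewrite inE; move: sv; rewrite inE.
have w5 : (5 * dtd_width (fun i : 'I_n => bag i) <= #|V| + 20)%N.
  apply: leq_trans (_ : 5 * K <= _)%N; first by rewrite leq_mul2l wK orbT.
  by apply: leq_trans (leq_addr _ _) (leq_trans hb5 _); rewrite leq_add2r.
have : ((5 * dtd_width (fun i : 'I_n => bag i))%:R : rat) <= (#|V| + 20)%:R.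
  by rewrite ler_nat.
rewrite natrM natrD => h; lra.
Qed.
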